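(* Let $\mathcal G=\mathfrak g_1\oplus\mathfrak g_2$ and $f,g\in C^*_{\mathsf{LTS}}(\mathcal G,\mathcal G)$ homogeneous. If $\|f\|=-1|l$ and $\|g\|=-1|k$, or if $\|f\|=l|-1$ and $\|g\|=k|-1$, then $[f,g]_{\mathsf{LTS}}=0$.
   Context: All vector spaces are over a field of characteristic $0$. Cochains: $C^p(\mathcal G,\mathcal G)=\mathrm{Hom}(\otimes^{2p+1}\mathcal G,\mathcal G)$, arguments $(\mathfrak X_1,\dots,\mathfrak X_p,x)$, $\mathfrak X_i=x_i\otimes y_i$; for $P\in C^p,Q\in C^q$, $(P\circ Q)(\mathfrak X_1,\dots,\mathfrak X_{p+q},x)=\sum_{k=1}^p(-1)^{(k-1)q}\sum_{\sigma\in\mathbb S(k-1,q)}(-1)^\sigma P(\mathfrak X_{\sigma(1)},\dots,\mathfrak X_{\sigma(k-1)},Q(\mathfrak X_{\sigma(k)},\dots,\mathfrak X_{\sigma(k+q-1)},x_{k+q})\otimes y_{k+q},\mathfrak X_{k+q+1},\dots,x)+\sum_{k=1}^p(-1)^{(k-1)q}\sum_{\sigma\in\mathbb S(k-1,q)}(-1)^\sigma P(\mathfrak X_{\sigma(1)},\dots,\mathfrak X_{\sigma(k-1)},x_{k+q}\otimes Q(\mathfrak X_{\sigma(k)},\dots,\mathfrak X_{\sigma(k+q-1)},y_{k+q}),\mathfrak X_{k+q+1},\dots,x)+\sum_{\sigma\in\mathbb S(p,q)}(-1)^\sigma P(\mathfrak X_{\sigma(1)},\dots,\mathfrak X_{\sigma(p)},Q(\mathfrak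 X_{\sigma(p+1)},\dots,\mathfrak X_{\sigma(p+q)},x))$ ($\mathbb S$ = shuffles), $[P,Q]=P\circ Q-(-1)^{pq}Q\circ P$; $C^p_{\mathsf{LTS}}$ is the subspace of $P$ with $P(\dots,x,x,y)=0$ and vanishing cyclic sum in the last three slots, with restricted bracket $[\cdot,\cdot]_{\mathsf{LTS}}$. Bidegree: $\mathfrak g^{a,b}\subset\otimes^{a+b}\mathcal G$ is the sum of all tensor products with exactly $a$ factors $\mathfrak g_1$ and $b$ factors $\mathfrak g_2$; $f\in C^p_{\mathsf{LTS}}$ has bidegree $l|k$ ($l+k=2p$) if $f(\mathfrak g^{l+1,k})\subset\mathfrak g_1$, $f(\mathfrak g^{l,k+1})\subset\mathfrak g_2$, and $f$ vanishes on all other $\mathfrak g^{a,b}$. *)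

(* Defs.v *)
From HB Require Import structures.
From mathcomp Require Import all_boot all_order all_algebra all_fingroup.
Set Implicit Arguments. Unset Strict Implicit. Unset Printing Implicit Defensive.
Import Order.TTheory GRing.Theory Num.Theory.
Local Open Scope ring_scope.

(* The vector space  G = g1 (+) g2  is modelled as the product  V1 * V2 ;
   g1 = V1 * 0 and g2 = 0 * V2. *)
Section Cochains.
Variables (K : fieldType) (V1 V2 : lmodType K).
Definition GG := (V1 * V2)%type.

Definition in_g1 (v : GG) : Prop := v.2 = 0.
Definition in_g2 (v : GG) : Prop := v.1 = 0.
Definition in_gc (c : bool) (v : GG) : Prop := if c then in_g1 v else in_g2 v.

(* A p-cochain takes (X_1,...,X_p,x) with X_i = x_i (x) y_i.  The X_i are
   given as a family  X : nat -> GG * GG  (X i = (x_{i+1}, y_{i+1})); only the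
   first p entries are meaningful (see [is_cochain]). *)
Definition cochain := (nat -> GG * GG) -> GG -> GG.

Definition upd (X : nat -> GG * GG) (i : nat) (z : GG * GG) : nat -> GG * GG :=
  fun j => if j == i then z else X j.

(* P is an element of C^p = Hom(G^{(x)(2p+1)}, G): it only depends on
   X 0, ..., X (p-1) and x, and it is linear in each of the 2p+1 slots. *)
Definition is_cochain (p : nat) (P : cochain) : Prop :=
  [/\ (forall X X' x, (forall i, (i < p)%N -> X i = X' i) -> P X x = P X' x),
      (forall X (a : K) u v, P X (a *: u + v) = a *: P X u + P X v),
      (forall X x i (a : K) u v, (i < p)%N ->
          P (upd X i (a *: u + v, (X i).2)) x =
          a *: P (upd X i (u, (X i).2)) x + P (upd X i (v, (X i).2)) x) &
      (forall X x i (a : K) u v, (i < p)%N ->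
          P (upd X i ((X i).1, a *: u + v)) x =
          a *: P (upd X i ((X i).1, u)) x + P (upd X i ((X i).1, v)) x)].

Definition is_lts_cochain (p : nat) (P : cochain) : Prop :=
  is_cochain p P /\
  ((0 < p)%N ->
     (forall X a c, P (upd X p.-1 (a, a)) c = 0) /\
     (forall X a b c, P (upd X p.-1 (a, b)) c + P (upd X p.-1 (b, c)) a
                      + P (upd X p.-1 (c, a)) b = 0)).

Definition n_g1 (p : nat) (cX : nat -> bool * bool) (cx : bool) : nat :=
  (\sum_(i < p) (nat_of_bool (cX i).1 + nat_of_bool (cX i).2) + nat_of_bool cx)%N.

Definition has_bidegree (p : nat) (l k : int) (P : cochain) : Prop :=
  l + k = (2 * p)%:Z /\
  forall (cX : nat -> bool * bool) (cx : bool) (X : nat -> GG * GG) (x : GG),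
    (forall i, (i < p)%N -> in_gc (cX i).1 (X i).1 /\ in_gc (cX i).2 (X i).2) ->
    in_gc cx x ->
    let a := (n_g1 p cX cx)%:Z in
    (a = l + 1 -> in_g1 (P X x)) /\
    (a = l -> in_g2 (P X x)) /\
    (a <> l + 1 -> a <> l -> P X x = 0).

Definition shuffle (i j : nat) (s : 'S_(i + j)) : bool :=
  [forall a : 'I_(i + j), forall b : 'I_(i + j),
     ((a < b)%N && ((b < i)%N || (i <= a)%N)) ==> (s a < s b)%N].

Definition sgn (n : nat) : K := (-1) ^+ n.

Definition permn (n : nat) (s : 'S_n) (i : nat) : nat :=
  if @insub nat (fun k => (k < n)%N) 'I_n i is Some j then nat_of_ord (s j) else i.

(* (P o Q)(X_1,...,X_{p+q},x) for P in C^p, Q in C^q, as in the paper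
   (indices shifted to start from 0; m = k-1). *)
Definition circ (p q : nat) (P Q : cochain) : cochain := fun X x =>
  \sum_(m < p)
     sgn (m * q) *: \sum_(s : 'S_(m + q) | shuffle s)
        sgn (odd_perm s) *:
          P (fun i => if (i < m)%N then X (permn s i)
                      else if i == m then
                        (Q (fun j => X (permn s (m + j))) (X (m + q)%N).1,
                         (X (m + q)%N).2)
                      else X (i + q)%N) x
  + \sum_(m < p)
     sgn (m * q) *: \sum_(s : 'S_(m + q) | shuffle s)
        sgn (odd_perm s) *:
          P (fun i => if (i < m)%N then X (permn s i)
                      else if i == m then
                        ((X (m + q)%N).1,
                         Q (fun j => X (permn s (m + j))) (X (m + q)%N).2)
                      else X (i + q)%N) x
  + \sum_(s : 'S_(p + q) | shuffle s)
        sgn (odd_perm s) *: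
          P (fun i => X (permn s i)) (Q (fun j => X (permn s (p + j))) x).

(* [P,Q] = P o Q - (-1)^{pq} Q o P ; [.,.]_LTS is its restriction. *)
Definition bracket (p q : nat) (P Q : cochain) : cochain := fun X x =>
  circ p q P Q X x - sgn (p * q) *: circ q p Q P X x.

End Cochains.

(* Main.v *)
Require Import Defs.
From HB Require Import structures.
From mathcomp Require Import all_boot all_order all_algebra all_fingroup.
From Stdlib Require Import FunctionalExtensionality.
From mathcomp Require Import zify.
Set Implicit Arguments. Unset Strict Implicit. Unset Printing Implicit Defensive.
Import GRing.Theory.
Local Open Scope ring_scope.

Section S.
Variables (K : fieldType) (V1 V2 : lmodType K).
Local Notation G := (GG V1 V2).
Local Notation cochain := (cochain V1 V2).

Definition pr (c : bool) (v : G) : G := if c then (0, v.2) else (v.1, 0).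
Definition prX c (X : nat -> G * G) : nat -> G * G :=
  fun i => (pr c (X i).1, pr c (X i).2).

Lemma pairE (u w : G) : u.1 = w.1 -> u.2 = w.2 -> u = w.
Proof. by case: u => ? ?; case: w => ? ? /= -> ->. Qed.

Lemma split_v (v : G) : v = 1 *: (v.1, 0) + (0, v.2).
Proof. by apply: pairE => /=; rewrite scale1r ?addr0 ?add0r ?scaler0. Qed.

Lemma pr_split c (v : G) : 1 *: pr c (v.1, 0) + pr c (0, v.2) = pr c v.
Proof. by case: c; apply: pairE => /=; rewrite ?scaler0 ?scale1r ?addr0 ?add0r. Qed.

Lemma pr_kill c (v : G) : in_gc c v -> pr c v = 0.
Proof. by case: c; case: v => a b; rewrite /in_gc /in_g1 /in_g2 /pr /= => ->. Qed.

Lemma pr_id c (v : G) : in_gc (~~ c) v -> pr c v = v.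
Proof. by case: c; case: v => a b; rewrite /in_gc /in_g1 /in_g2 /pr /= => ->. Qed.

Lemma pr_hom c (v : G) : in_gc (~~ c) (pr c v).
Proof. by case: c. Qed.

Lemma pr0 c : pr c 0 = 0.
Proof. by case: c. Qed.

Lemma hom1 (v : G) : in_gc true ((v.1, 0) : G).
Proof. by []. Qed.
Lemma hom2 (v : G) : in_gc false ((0, v.2) : G).
Proof. by []. Qed.

Lemma upd_upd (X : nat -> G * G) i z z' : upd (upd X i z) i z' = upd X i z'.
Proof. apply: functional_extensionality => j; rewrite /upd; by case: (j == i). Qed.
Lemma upd_eq (X : nat -> G * G) i z : upd X i z i = z.
Proof. by rewrite /upd eqxx. Qed.

Lemma zzz (z : G) : z = z + z -> z = 0.
Proof. by rewrite -{1}[z]addr0 => /addrI ->. Qed.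

Section Coch.
Variables (p : nat) (P : cochain).
Hypothesis HP : is_cochain p P.

Lemma c_ext X X' x : (forall i, (i < p)%N -> X i = X' i) -> P X x = P X' x.
Proof. by case: HP => h _ _ _; apply: h. Qed.

Lemma c_linx X u v : P X (u + v) = P X u + P X v.
Proof. by case: HP => _ h _ _; have := h X 1 u v; rewrite !scale1r. Qed.

Lemma c_lin1 X i u v y : (i < p)%N ->
  forall x, P (upd X i (u + v, y)) x = P (upd X i (u, y)) x + P (upd X i (v, y)) x.
Proof.
case: HP => _ _ h _ ip x.
have := h (upd X i (0, y)) x i 1 u v ip.
by rewrite !upd_upd upd_eq /= !scale1r.
Qed.

Lemma c_lin2 X i u v y : (i < p)%N ->
  forall x, P (upd X i (y, u + v)) x = P (upd X i (y, u)) x + P (upd X i (y, v)) x.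
Proof.
case: HP => _ _ _ h ip x.
have := h (upd X i (y, 0)) x i 1 u v ip.
by rewrite !upd_upd upd_eq /= !scale1r.
Qed.

Lemma c_zx X : P X 0 = 0.
Proof. by apply: zzz; rewrite -c_linx addr0. Qed.

Lemma c_z1 X x i : (i < p)%N -> (X i).1 = 0 -> P X x = 0.
Proof.
move=> ip h; rewrite (@c_ext X (upd X i (0, (X i).2))); last first.
  by move=> j _; rewrite /upd; case: eqP => // ->; rewrite -h; case: (X i).
apply: zzz; have := c_lin1 X 0 0 (X i).2 ip x; rewrite addr0; done.
Qed.

Lemma c_z2 X x i : (i < p)%N -> (X i).2 = 0 -> P X x = 0.
Proof.
move=> ip h; rewrite (@c_ext X (upd X i ((X i).1, 0))); last first.
  by move=> j _; rewrite /upd; case: eqP => // ->; rewrite -h; case: (X i).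
apply: zzz; have := c_lin2 X 0 0 (X i).1 ip x; rewrite addr0; done.
Qed.

End Coch.

Definition cnt (c : bool) (p : nat) (cX : nat -> bool * bool) (cx : bool) :=
  n_g1 p (fun i => ((cX i).1 == c, (cX i).2 == c)) (cx == c).

Lemma cnt_true p cX cx : cnt true p cX cx = n_g1 p cX cx.
Proof.
rewrite /cnt /n_g1 !eqb_id; congr (_ + _)%N; apply: eq_bigr => i _ /=.
by rewrite !eqb_id.
Qed.

Lemma cnt_false p cX cx : (n_g1 p cX cx + cnt false p cX cx = (2 * p).+1)%N.
Proof.
rewrite /cnt /n_g1 addnACA -big_split /= .
have -> : (\sum_(i < p) (((cX i).1 + (cX i).2) + (((cX i).1 == false) + ((cX i).2 == false))))%N
   = (\sum_(i < p) 2)%N.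
  by apply: eq_bigr => i _; case: (cX i) => [[] []].
rewrite sum_nat_const card_ord; case: cx => /=; lia.
Qed.

Lemma cnt0 c p cX cx : cnt c p cX cx = 0%N ->
  cx = ~~ c /\ forall i, (i < p)%N -> (cX i).1 = ~~ c /\ (cX i).2 = ~~ c.
Proof.
rewrite /cnt /n_g1 => /eqP; rewrite addn_eq0 => /andP [/eqP hs hx].
split; first by move: hx; clear hs; case: cx; case: c.
move=> i ip; move: hs => /eqP; rewrite sum_nat_eq0 => /forallP /(_ (Ordinal ip)) /=.
by clear hx; case: (cX i) => a b; case: a; case: b; case: c.
Qed.

Lemma cntn0 c p cX cx : cnt c p cX cx <> 0%N ->
  cx = c \/ exists i, (i < p)%N /\ ((cX i).1 = c \/ (cX i).2 = c).
Proof.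
rewrite /cnt /n_g1 => h.
case: (boolP (cx == c)) => [/eqP -> | hx]; first by left.
right; case: (boolP [exists i : 'I_p, ((cX i).1 == c) || ((cX i).2 == c)]).
  move=> /existsP [i /orP [] /eqP e]; exists i; split => //; by [left | right].
rewrite negb_exists => /forallP hall; exfalso; apply: h.
rewrite (negbTE hx) addn0; apply: big1 => i _.
by move: (hall i); rewrite negb_or => /andP [/negbTE -> /negbTE ->].
Qed.

Definition Hom (c : bool) (p : nat) (P : cochain) :=
  forall cX cx X x,
    (forall i, (i < p)%N -> in_gc (cX i).1 (X i).1 /\ in_gc (cX i).2 (X i).2) ->
    in_gc cx x ->
    (cnt c p cX cx = 0%N -> pr c (P X x) = 0) /\
    (cnt c p cX cx <> 0%N -> P X x = 0).

Lemma Hom_true p l (P : cochain) : has_bidegree p (-1) l P -> Hom true p P.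
Proof.
case=> _ h cX cx X x hX hx; have [h1 [_ h3]] := h cX cx X x hX hx.
rewrite cnt_true; split => e.
  by apply: pr_kill; apply: h1; rewrite e.
by apply: h3; lia.
Qed.

Lemma Hom_false p l (P : cochain) : has_bidegree p l (-1) P -> Hom false p P.
Proof.
case=> hl h cX cx X x hX hx; have [_ [h2 h3]] := h cX cx X x hX hx.
have := cnt_false p cX cx; split => e.
  by apply: pr_kill; apply: h2; lia.
by apply: h3; lia.
Qed.

Definition hom (v : G) := in_gc true v \/ in_gc false v.

Lemma hom_gc (v : G) : hom v -> in_gc (v.2 == 0) v.
Proof. by case: eqP => // /eqP h [] //= /eqP. Qed.

Lemma split_v' (v : G) : v = (v.1, 0) + (0, v.2).
Proof. by rewrite {1}(split_v v) scale1r. Qed.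

Lemma pr_split' c (v : G) : pr c (v.1, 0) + pr c (0, v.2) = pr c v.
Proof. by rewrite -[in RHS](pr_split c v) scale1r. Qed.

Lemma prX_upd c X i z : prX c (upd X i z) = upd (prX c X) i (pr c z.1, pr c z.2).
Proof. by apply: functional_extensionality => j; rewrite /prX /upd; case: (j == i). Qed.

Section Main.
Variables (c : bool) (p : nat) (P : cochain).
Hypothesis HP : is_cochain p P.
Hypothesis HH : Hom c p P.

Lemma c_split4 X i a1 a2 b1 b2 x : (i < p)%N ->
  P (upd X i (a1 + a2, b1 + b2)) x =
  P (upd X i (a1, b1)) x + P (upd X i (a1, b2)) x +
  (P (upd X i (a2, b1)) x + P (upd X i (a2, b2)) x).
Proof. by move=> ip; rewrite (c_lin1 HP) // !(c_lin2 HP). Qed.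

Lemma main_base X x :
  (forall i, (i < p)%N -> hom (X i).1 /\ hom (X i).2) -> hom x ->
  P X x = P (prX c X) (pr c x).
Proof.
move=> hX hx.
pose cX i := (((X i).1.2 == 0), ((X i).2.2 == 0)).
pose cx := (x.2 == 0).
have hX' : forall i, (i < p)%N -> in_gc (cX i).1 (X i).1 /\ in_gc (cX i).2 (X i).2.
  by move=> i ip; have [h1 h2] := hX i ip; split; apply: hom_gc.
have hx' : in_gc cx x by apply: hom_gc.
have [H0 H1] := HH hX' hx'.
case: (eqVneq (cnt c p cX cx) 0%N) => e.
  have [ex ei] := cnt0 e.
  rewrite pr_id; last by rewrite -ex.
  apply: (c_ext HP) => i ip; have [e1 e2] := ei i ip.
  have [g1 g2] := hX' i ip.
  rewrite /prX !pr_id; [by case: (X i) | by rewrite -e2 | by rewrite -e1].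
have e' : cnt c p cX cx <> 0%N by apply/eqP.
rewrite (H1 e'); case: (cntn0 e') => [ex | [i [ip [e1 | e2]]]].
- by rewrite pr_kill ?(c_zx HP) // -ex.
- have [g1 _] := hX' i ip.
  by rewrite (c_z1 HP _ ip) //= pr_kill // -e1.
- have [_ g2] := hX' i ip.
  by rewrite (c_z2 HP _ ip) //= pr_kill // -e2.
Qed.

Lemma main_step m X x :
  (forall i, (m <= i)%N -> (i < p)%N -> hom (X i).1 /\ hom (X i).2) -> hom x ->
  P X x = P (prX c X) (pr c x).
Proof.
elim: m X => [|m IH] X hX hx.
  by apply: main_base => // i ip; apply: hX.
case: (ltnP m p) => mp; last first.
  by apply: IH => // i mi ip; exfalso; lia.
have hm : forall a b, hom a -> hom b ->
    P (upd X m (a, b)) x = P (upd (prX c X) m (pr c a, pr c b)) (pr c x).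
  move=> a b ha hb; rewrite IH; [by rewrite prX_upd | | by []] => i mi ip.
  rewrite /upd; case: eqP => [_ | ne]; first by split.
  by apply: hX => //; lia.
have hX0 : P X x = P (upd X m ((X m).1, (X m).2)) x.
  by apply: (c_ext HP) => i _; rewrite /upd; case: eqP => // ->; case: (X m).
have hX1 : P (prX c X) (pr c x) =
           P (upd (prX c X) m (pr c (X m).1, pr c (X m).2)) (pr c x).
  by apply: (c_ext HP) => i _; rewrite /upd /prX; case: eqP => // ->.
rewrite hX0 hX1 {1}(split_v' (X m).1) {1}(split_v' (X m).2) c_split4 //.
rewrite -{1}(pr_split' c (X m).1) -{1}(pr_split' c (X m).2) c_split4 //.
rewrite !hm //; by [left | right].
Qed.

Lemma main X x : P X x = P (prX c X) (pr c x).
Proof.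
rewrite {1}(split_v' x) (c_linx HP) -(pr_split' c x) (c_linx HP).
have hv : forall i, (p <= i)%N -> (i < p)%N -> hom (X i).1 /\ hom (X i).2.
  by move=> i pi ip; exfalso; lia.
rewrite [P X (_, 0)](@main_step p X _ hv); last by left.
by rewrite [P X (0, _)](@main_step p X _ hv); last by right.
Qed.

Lemma main_out X x : pr c (P X x) = 0.
Proof.
rewrite main.
have hX' : forall i, (i < p)%N -> in_gc ((fun _ => (~~ c, ~~ c)) i).1 ((prX c X) i).1 /\
                                  in_gc ((fun _ => (~~ c, ~~ c)) i).2 ((prX c X) i).2.
  by move=> i _; split; apply: pr_hom.
have [H0 _] := HH hX' (pr_hom c x); apply: H0.
rewrite /cnt /n_g1 /=; case: c HH => _; rewrite big1 //.
Qed.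

Lemma main_zero1 X x i : (i < p)%N -> pr c (X i).1 = 0 -> P X x = 0.
Proof. by move=> ip h; rewrite main (c_z1 HP _ ip). Qed.
Lemma main_zero2 X x i : (i < p)%N -> pr c (X i).2 = 0 -> P X x = 0.
Proof. by move=> ip h; rewrite main (c_z2 HP _ ip). Qed.
Lemma main_zerox X x : pr c x = 0 -> P X x = 0.
Proof. by move=> h; rewrite main h (c_zx HP). Qed.
End Main.

Lemma circ0 c p q (P Q : cochain) X x :
  is_cochain p P -> Hom c p P -> is_cochain q Q -> Hom c q Q ->
  circ p q P Q X x = 0.
Proof.
move=> hP HP hQ HQ; rewrite /circ.
rewrite big1; last first.
  move=> m _; rewrite big1 ?scaler0 // => s _.
  rewrite (main_zero1 hP HP _ (i := m)) ?scaler0 //= ltnn eqxx.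
  exact: (main_out hQ HQ).
rewrite big1; last first.
  move=> m _; rewrite big1 ?scaler0 // => s _.
  rewrite (main_zero2 hP HP _ (i := m)) ?scaler0 //= ltnn eqxx.
  exact: (main_out hQ HQ).
rewrite big1 ?addr0 // => s _.
by rewrite (main_zerox hP HP) ?scaler0 // (main_out hQ HQ).
Qed.
End S.

Unset Implicit Arguments.
Set Strict Implicit.

Theorem lemma3p3 (K : fieldType) (V1 V2 : lmodType K)
  (charK0 : [pchar K] =i pred0)
  (p q : nat) (f g : cochain V1 V2) (l k : int) :
  is_lts_cochain p f -> is_lts_cochain q g ->
  ((has_bidegree p (-1) l f /\ has_bidegree q (-1) k g) \/
   (has_bidegree p l (-1) f /\ has_bidegree q k (-1) g)) ->
  forall (X : nat -> GG V1 V2 * GG V1 V2) (x : GG V1 V2),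
    bracket p q f g X x = 0.
Proof.
move=> [hf _] [hg _] [[bf bg] | [bf bg]] X x; rewrite /bracket.
- by rewrite (circ0 _ _ hf (Hom_true bf) hg (Hom_true bg))
             (circ0 _ _ hg (Hom_true bg) hf (Hom_true bf)) scaler0 subr0.
- by rewrite (circ0 _ _ hf (Hom_false bf) hg (Hom_false bg))
             (circ0 _ _ hg (Hom_false bg) hf (Hom_false bf)) scaler0 subr0.
Qed.
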